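(* Let $\mathbb{k}$ be a field, and let $\mathbb{k}^{2n} = \mathbb{k}^n_x \times \mathbb{k}^n_\xi$ have coordinates $(x,\xi) = (x_1,\dots,x_n,\xi_1,\dots,\xi_n)$. Let $X \subseteq \mathbb{k}^n_\xi$ be a subvariety. If $L$ is an $\ell \times n$ matrix with entries in $\mathbb{k}$, then the variety $\mathcal{V}(Lx\xi)$ of the bilinear forms $Lx\xi$ in $\mathbb{k}^{2n}$ is transverse to $\mathbb{k}^n \times X$ at any smooth point of $\mathbb{k}^n \times X$ whose $\xi$-coordinates are all nonzero.
   Context: Here $x\xi$ denotes the column vector $(x_1\xi_1,\dots,x_n\xi_n)^T$, and $Lx\xi$ is the vector of $\ell$ bilinear forms obtained by multiplying $L$ times $x\xi$; $\mathcal{V}(Lx\xi)\subseteq \mathbb{k}^{2n}$ is their common zero locus. Varieties are considered over the algebraic closure of $\mathbb{k}$ when needed. Two subvarieties $V,W$ of an ambient affine space are transverse at a point $p \in V\cap W$ if the (Zariski) tangent spaces $T_pV$ and $T_pW$ sum to the whole tangent space of the ambient space; the claim concerns points $p$ of $\mathbb{k}^n\times X$ (with all $\xi$-coordinates nonzero, smooth on $\mathbb{k}^n\times X$) lying in $\mathcal{V}(Lx\xi)$. *)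

(* Defs.v *)
From HB Require Import structures.
From mathcomp Require Import all_boot all_order all_algebra.
From mathcomp Require Import mpoly.
Set Implicit Arguments. Unset Strict Implicit. Unset Printing Implicit Defensive.
Import Order.TTheory GRing.Theory.
Local Open Scope ring_scope.

(* Points of the affine space K^m are functions 'I_m -> K; subsets of K^m are
   predicates.  K is an algebraically closed field (playing the role of the
   algebraic closure of the base field k). *)
Definition pt (K : Type) (m : nat) := 'I_m -> K.

Definition zeroset (F : fieldType) (K : closedFieldType)
  (iota : {rmorphism F -> K}) (m : nat) (S : {mpoly F[m]} -> Prop)
  : pt K m -> Prop :=
  fun z => forall g, S g -> (map_mpoly iota g).@[z] = 0.

Definition zclosed (K : closedFieldType) (m : nat) (Z : pt K m -> Prop) :=
  exists S : {mpoly K[m]} -> Prop, forall z, Z z <-> (forall f, S f -> f.@[z] = 0).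

Definition zirreducible (K : closedFieldType) (m : nat) (Z : pt K m -> Prop) :=
  [/\ zclosed Z, exists z, Z z &
      forall Z1 Z2 : pt K m -> Prop, zclosed Z1 -> zclosed Z2 ->
        (forall z, Z z -> Z1 z \/ Z2 z) ->
        (forall z, Z z -> Z1 z) \/ (forall z, Z z -> Z2 z)].

(* Zariski tangent space at p of the (reduced) variety Z: the vectors
   annihilated by the differentials at p of all polynomials vanishing on Z. *)
Definition tangent (K : closedFieldType) (m : nat) (Z : pt K m -> Prop)
  (p : pt K m) : pt K m -> Prop :=
  fun v => forall f : {mpoly K[m]}, (forall z, Z z -> f.@[z] = 0) ->
    \sum_(i < m) (mderiv i f).@[p] * v i = 0.

(* There is a chain Z_0 ⊊ Z_1 ⊊ ... ⊊ Z_d of irreducible closed subsets of Y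
   with p ∈ Z_0 ; the largest such d is the local dimension dim_p Y. *)
Definition chain_at (K : closedFieldType) (m : nat) (Y : pt K m -> Prop)
  (p : pt K m) (d : nat) :=
  exists c : nat -> pt K m -> Prop,
    [/\ forall i, (i <= d)%N -> zirreducible (c i),
        forall i, (i < d)%N -> (forall z, c i z -> c i.+1 z) /\
                               (exists z, c i.+1 z /\ ~ c i z),
        forall z, c d z -> Y z
      & c 0%N p].

(* p is a smooth point of Y : dim T_p Y = dim_p Y. *)
Definition smooth_point (K : closedFieldType) (m : nat) (Y : pt K m -> Prop)
  (p : pt K m) :=
  Y p /\
  exists d : nat, [/\ chain_at Y p d, ~ chain_at Y p d.+1 &
    exists B : 'M[K]_(d, m), row_free B /\
      forall v : pt K m, tangent Y p v <-> (\row_i v i <= B)%MS].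

Definition transverse_at (K : closedFieldType) (m : nat)
  (V W : pt K m -> Prop) (p : pt K m) :=
  forall w : pt K m, exists a b : pt K m,
    [/\ tangent V p a, tangent W p b & forall i, w i = a i + b i].

Definition xcoord (n : nat) (j : 'I_n) : 'I_(n + n) := lshift n j.
Definition xicoord (n : nat) (j : 'I_n) : 'I_(n + n) := rshift n j.

Definition bilin_forms (F : fieldType) (l n : nat) (L : 'M[F]_(l, n)) (i : 'I_l)
  : {mpoly F[n + n]} :=
  \sum_(j < n) (L i j)%:MP * 'X_(xcoord j) * 'X_(xicoord j).

Definition bilin_set (F : fieldType) (l n : nat) (L : 'M[F]_(l, n))
  : {mpoly F[n + n]} -> Prop :=
  fun g => exists i, g = bilin_forms L i.

Definition prod_full (K : closedFieldType) (n : nat) (X : pt K n -> Prop)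
  : pt K (n + n) -> Prop :=
  fun z => X (fun j => z (xicoord j)).

(* Main.v *)
Require Import Defs.
From HB Require Import structures.
From mathcomp Require Import all_boot all_order all_algebra.
From mathcomp Require Import mpoly.
From mathcomp Require Import ring.
Import GRing.Theory.
Local Open Scope ring_scope.

Section H.
Variables (K : closedFieldType) (m : nat).

Lemma poly_vanish (Q : {poly K}) : (forall s, s != 0 -> Q.[s] = 0) -> Q = 0.
Proof.
move=> H; apply/eqP/negPn/negP => Q0.
have : size ('X * Q + 1) != 1%N.
  have hs : size ('X * Q) = (size Q).+1 by rewrite mulrC size_mulX.
  rewrite size_polyDl hs ?size_poly1 ?eqSS ?ltnS ?lt0n ?size_poly_eq0 //.
move/closed_rootP=> [r]; rewrite /root !hornerE => /eqP hr.
have r0 : r != 0 by apply/eqP=> r0; move: hr; rewrite r0 mul0r add0r => /eqP; rewrite oner_eq0.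
by move: hr; rewrite H // mulr0 add0r => /eqP; rewrite oner_eq0.
Qed.

Lemma eval_mderiv (f : {mpoly K[m]}) (p : 'I_m -> K) i :
  (mderiv i f).@[p] = \sum_(mm <- msupp f) (mm i)%:R * f@_mm * \prod_j p j ^+ (mm - U_(i))%MM j.
Proof.
rewrite /mderiv raddf_sum; apply: eq_bigr => mm _.
by rewrite /= mevalZ mevalX.
Qed.

Lemma eval_sum (f : {mpoly K[m]}) (p : 'I_m -> K) :
  f.@[p] = \sum_(mm <- msupp f) f@_mm * \prod_j p j ^+ mm j.
Proof. exact: mevalE. Qed.


Definition upd (p : 'I_m -> K) i t := fun j => if j == i then t else p j.

Lemma prodB1 (p : 'I_m -> K) i (mm : 'X_{1..m}) :
  \prod_j p j ^+ (mm - U_(i))%MM j = p i ^+ (mm i).-1 * \prod_(j | j != i) p j ^+ mm j.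
Proof.
rewrite (bigD1 i) //= mnmBE mnm1E eqxx subn1; congr (_ * _).
by apply: eq_bigr => j ji; rewrite mnmBE mnm1E eq_sym (negbTE ji) subn0.
Qed.

Lemma deriv_line (f : {mpoly K[m]}) (p : 'I_m -> K) i :
  (forall t, f.@[upd p i t] = 0) -> (mderiv i f).@[p] = 0.
Proof.
move=> Hf.
pose P (mm : 'X_{1..m}) := \prod_(j | j != i) p j ^+ mm j.
pose Q : {poly K} := \sum_(mm <- msupp f) (f@_mm * P mm) *: 'X^(mm i).
have HQ : forall t, Q.[t] = f.@[upd p i t].
  move=> t; rewrite eval_sum horner_sum; apply: eq_bigr => mm _.
  rewrite hornerZ hornerXn (bigD1 i) //= /upd eqxx -mulrA; congr (_ * _).
  rewrite mulrC; congr (_ * _); apply: eq_bigr => j ji; by rewrite (negbTE ji).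
have Q0 : Q = 0 by apply: poly_vanish => s _; rewrite HQ Hf.
have : (Q^`()).[p i] = 0 by rewrite Q0 deriv0 horner0.
rewrite /Q raddf_sum horner_sum eval_mderiv => H0; apply: etrans H0; apply: eq_bigr => mm _ /=.
rewrite derivZ derivXn hornerZ hornerMn hornerXn prodB1.
by rewrite -mulr_natl; rewrite /P; ring.
Qed.


Lemma eval_mderivM (f : {mpoly K[m]}) (p : 'I_m -> K) i :
  (mderiv i f).@[p] * p i = \sum_(mm <- msupp f) (mm i)%:R * (f@_mm * \prod_j p j ^+ mm j).
Proof.
rewrite eval_mderiv mulr_suml; apply: eq_bigr => mm _.
rewrite prodB1 [in RHS](bigD1 i) //=.
case E: (mm i) => [|k]; first by rewrite !mul0r.
by rewrite /= exprS; ring.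
Qed.

Definition Tsc (p : 'I_m -> K) i1 i2 (s : K) :=
  fun j => if j == i1 then p j / s else if j == i2 then p j * s else p j.

Lemma deriv_scale (f : {mpoly K[m]}) (p : 'I_m -> K) i1 i2 : i1 != i2 ->
  (forall s, s != 0 -> f.@[Tsc p i1 i2 s] = 0) ->
  (mderiv i2 f).@[p] * p i2 - (mderiv i1 f).@[p] * p i1 = 0.
Proof.
move=> i12 Hf.
pose D := msize f.
have hD : forall mm, mm \in msupp f -> (mm i1 <= D)%N.
  move=> mm /msize_mdeg_lt; rewrite mdegE (bigD1 i1) //= => h.
  by apply: leq_trans (ltnW h); apply: leq_addr.
pose E (mm : 'X_{1..m}) := f@_mm * \prod_j p j ^+ mm j.
pose Q : {poly K} := \sum_(mm <- msupp f) E mm *: 'X^(mm i2 + D - mm i1).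
have HQ : forall s, s != 0 -> Q.[s] = s ^+ D * f.@[Tsc p i1 i2 s].
  move=> s s0; rewrite eval_sum horner_sum mulr_sumr big_seq [RHS]big_seq.
  apply: eq_bigr => mm /hD hm.
  have i21 : i2 != i1 by rewrite eq_sym.
  rewrite hornerZ hornerXn /E (bigD1 i1) //= (bigD1 i2) //= [in RHS](bigD1 i1) //= [in RHS](bigD1 i2) //=.
  rewrite /Tsc eqxx (negbTE i21) eqxx.
  have -> : \prod_(i | (i != i1) && (i != i2)) (if i == i1 then p i / s else if i == i2 then p i * s else p i) ^+ mm i
     = \prod_(i | (i != i1) && (i != i2)) p i ^+ mm i.
    by apply: eq_bigr => j /andP[/negbTE -> /negbTE ->].
  rewrite -addnBA // exprD -{2}(subnK hm) exprD !exprMn ?exprVn.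
  have sa : s ^+ mm i1 != 0 by rewrite expf_neq0.
  move: (s ^+ mm i1) sa (p i1 ^+ mm i1) (p i2 ^+ mm i2) (\prod_(i | (i != i1) && (i != i2)) p i ^+ mm i) (s ^+ mm i2) (s ^+ (D - mm i1)) (f@_mm) => a sa A B C S2 S3 c.
  by field.
have Q0 : Q = 0 by apply: poly_vanish => s s0; rewrite HQ // Hf // mulr0.
have H1 : (Q^`()).[1] = 0 by rewrite Q0 deriv0 horner0.
have H2 : f.@[p] = 0.
  rewrite -(Hf 1 (oner_neq0 _)); apply: meval_eq => j; rewrite /Tsc.
  by case: ifP => _; [rewrite divr1 | case: ifP => _; rewrite ?mulr1].
move: H1; rewrite /Q raddf_sum horner_sum => H1.
have H2' : \sum_(mm <- msupp f) E mm = 0 by rewrite eval_sum in H2.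
rewrite !eval_mderivM -sumrB.
have -> : \sum_(mm <- msupp f) ((mm i2)%:R * E mm - (mm i1)%:R * E mm)
  = \sum_(mm <- msupp f) ((E mm *: 'X^(mm i2 + D - mm i1))^`()).[1]
    - D%:R * \sum_(mm <- msupp f) E mm.
  rewrite mulr_sumr -sumrB big_seq [RHS]big_seq; apply: eq_bigr => mm /hD hm /=.
  rewrite derivZ derivXn hornerZ hornerMn hornerXn expr1n -addnBA // natrD natrB //.
  rewrite -mulr_natr; move: (E mm) => e; ring.
by rewrite H1 H2' mulr0 subr0.
Qed.

End H.

Lemma split_l n (j : 'I_n) : split (lshift n j) = inl j.
Proof. exact: (unsplitK (inl _ j)). Qed.
Lemma split_r n (j : 'I_n) : split (rshift n j) = inr j.
Proof. exact: (unsplitK (inr _ j)). Qed.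

Lemma xneq n (j k : 'I_n) : xcoord j != xicoord k.
Proof. by apply/eqP => /(congr1 val) /= h; move: (ltn_ord j); rewrite h ltnNge leq_addr. Qed.
Lemma xeq n (j k : 'I_n) : (xcoord j == xcoord k) = (j == k).
Proof. by apply/eqP/eqP => [/(congr1 val) /= /val_inj|->]. Qed.
Lemma xieq n (j k : 'I_n) : (xicoord j == xicoord k) = (j == k).
Proof. apply/eqP/eqP => [h|->] //; apply/val_inj; move/(congr1 val): h => /= /eqP; rewrite eqn_add2l => /eqP. done. Qed.

Arguments xneq {n}. Arguments xeq {n}. Arguments xieq {n}. Arguments split_l {n}. Arguments split_r {n}.

Lemma eval_bilin (F : fieldType) (K : closedFieldType) (iota : {rmorphism F -> K})
  l n (L : 'M[F]_(l, n)) i (z : pt K (n + n)) :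
  (map_mpoly iota (bilin_forms L i)).@[z] =
  \sum_(j < n) iota (L i j) * z (xcoord j) * z (xicoord j).
Proof.
rewrite /bilin_forms (raddf_sum (map_mpoly iota)) raddf_sum; apply: eq_bigr => j _ /=.
by rewrite !rmorphM /= map_mpolyC !map_mpolyX mevalC !mevalXU.
Qed.

Theorem lemma1p1 (F : fieldType) (K : closedFieldType)
  (iota : {rmorphism F -> K}) (n l : nat)
  (S : {mpoly F[n]} -> Prop) (L : 'M[F]_(l, n)) (p : pt K (n + n)) :
  let X := zeroset iota S in
  let V := zeroset iota (bilin_set L) in
  let Y := prod_full X in
  smooth_point Y p ->
  (forall j : 'I_n, p (xicoord j) != 0) ->
  V p ->
  transverse_at V Y p.
Proof.
move=> X V Y [Yp _] pne0 Vp w.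
pose c j := w (xicoord j) / p (xicoord j).
pose a : pt K (n + n) := fun idx => match split idx with
  | inl j => - p (xcoord j) * c j | inr j => w (xicoord j) end.
exists a, (fun idx => w idx - a idx); split; last by move=> i; rewrite addrC subrK.
- move=> f Hf; rewrite big_split_ord /=.
  rewrite (eq_bigr (fun j => - (c j * ((mderiv (xcoord j) f).@[p] * p (xcoord j))))); last first.
    by move=> j _; rewrite /a split_l /xcoord; ring.
  rewrite [X in _ + X](eq_bigr (fun j => c j * ((mderiv (xicoord j) f).@[p] * p (xicoord j)))); last first.
    move=> j _; rewrite /a split_r /c; move: (pne0 j); rewrite /xicoord => pj.
    by field.
  rewrite sumrN addrC; apply/eqP; rewrite subr_eq0; apply/eqP; apply: eq_bigr => j _; congr (_ * _).
  apply/eqP; rewrite -subr_eq0; apply/eqP.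
  apply: (@deriv_scale _ _ f p _ _ (xneq j j)) => s s0; apply: Hf => g [i ->].
  move: (Vp _ (ex_intro _ i erefl)); rewrite !eval_bilin => H; apply: etrans H; apply: eq_bigr => k _.
  rewrite /Tsc xeq (negbTE (xneq k j)) [xicoord k == _]eq_sym (negbTE (xneq j k)) xieq.
  case: (eqVneq k j) => [->|_] //.
  by rewrite -!mulrA; congr (_ * _); field.
- move=> f Hf; rewrite big_split_ord /= [X in _ + X]big1 ?addr0; last first.
    by move=> j _; rewrite /a split_r subrr mulr0.
  apply: big1 => j _; rewrite (@deriv_line _ _ f p (xcoord j)) ?mul0r // => t.
  apply: Hf => g Sg; rewrite -(Yp g Sg); apply: meval_eq => k.
  by rewrite /upd eq_sym (negbTE (xneq j k)).
Qed.
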